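(* Let $I$ be a compact segment and let $G\subset \mathrm{Diff}^1_+(I)$ be a group. The following two properties are equivalent: (i) there is a path $(h_t)_{t\in[0,1)}$ of diffeomorphisms $h_t\in \mathrm{Diff}^1_+(I)$, continuous for the $C^1$-topology, such that for every $g\in G$, $h_t g h_t^{-1}$ tends to the identity in the $C^1$-topology as $t\to 1$; (ii) there is a sequence $(h_n)_{n\in\mathbb N}$ of diffeomorphisms $h_n\in \mathrm{Diff}^1_+(I)$ such that for every $g\in G$, $h_n g h_n^{-1}$ tends to the identity in the $C^1$-topology as $n\to+\infty$.
   Context: $\mathrm{Diff}^1_+(I)$ denotes the group of orientation preserving $C^1$-diffeomorphisms of the segment $I$, endowed with the $C^1$-topology. *)

(* Defs.v *)
From Stdlib Require Import Reals.
Open Scope R_scope.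

(* The compact segment I = [a,b], a < b.  Maps are modelled as R -> R;
   only their values on I matter. *)
Definition in_I (a b x : R) : Prop := a <= x <= b.

Definition deriv_on (a b : R) (f df : R -> R) : Prop :=
  forall x, in_I a b x ->
    limit1_in (fun y => (f y - f x) / (y - x))
              (fun y => in_I a b y /\ y <> x) (df x) x.

Definition C1_on (a b : R) (f : R -> R) : Prop :=
  exists df, deriv_on a b f df /\
    forall x, in_I a b x -> limit1_in df (in_I a b) (df x) x.

Definition inverse_on (a b : R) (f finv : R -> R) : Prop :=
  forall x, in_I a b x ->
    in_I a b (f x) /\ in_I a b (finv x) /\ f (finv x) = x /\ finv (f x) = x.

Definition Diff1p (a b : R) (f : R -> R) : Prop :=
  (exists finv, inverse_on a b f finv /\ C1_on a b f /\ C1_on a b finv) /\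
  (forall x y, in_I a b x -> in_I a b y -> x < y -> f x < f y).

(* f and g are eps-close in the C^1 distance sup|f-g| + sup|f'-g'|
   (componentwise version; derivatives are unique on I). *)
Definition C1_close (a b : R) (f g : R -> R) (eps : R) : Prop :=
  forall df dg, deriv_on a b f df -> deriv_on a b g dg ->
    forall x, in_I a b x -> Rabs (f x - g x) < eps /\ Rabs (df x - dg x) < eps.

(* G is a subgroup of Diff^1_+(I) (group elements identified up to
   agreement on I). *)
Definition subgroup_Diff1p (a b : R) (G : (R -> R) -> Prop) : Prop :=
  (forall g, G g -> Diff1p a b g) /\
  G (fun x => x) /\
  (forall g1 g2, G g1 -> G g2 -> G (fun x => g1 (g2 x))) /\
  (forall g, G g -> exists g', G g' /\ inverse_on a b g g').

(* Main.v *)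
Require Import Defs.
From Stdlib Require Import Reals Lra Lia ZArith ClassicalEpsilon.
From Coquelicot Require Derive.
Open Scope R_scope.

Lemma lim_eps f D l x :
  limit1_in f D l x <-> forall eps, eps > 0 -> exists alp, alp > 0 /\
     forall y, D y -> Rabs (y - x) < alp -> Rabs (f y - l) < eps.
Proof.
  unfold limit1_in, limit_in; simpl; unfold Rdist; split.
  - intros H eps He; destruct (H eps He) as [alp [Ha H']]; exists alp; split; auto.
  - intros H eps He; destruct (H eps He) as [alp [Ha H']]; exists alp; split; auto.
    intros y [Dy Hy]; auto.
Qed.

Lemma lim_ext f g D l x : (forall y, D y -> f y = g y) -> limit1_in f D l x -> limit1_in g D l x.
Proof.
  intros E H; rewrite lim_eps in H |- *; intros eps He.
  destruct (H eps He) as [alp [Ha H']]; exists alp; split; auto.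
  intros y Dy Hy; rewrite <- E; auto.
Qed.

Lemma lim_sub f D D' l x : (forall y, D' y -> D y) -> limit1_in f D l x -> limit1_in f D' l x.
Proof.
  intros E H; rewrite lim_eps in H |- *; intros eps He.
  destruct (H eps He) as [alp [Ha H']]; exists alp; split; auto.
Qed.

Lemma lim_ge f D l x c : (forall y, D y -> c <= f y) -> adhDa D x -> limit1_in f D l x -> c <= l.
Proof.
  intros Hc Ha H; destruct (Rle_or_lt c l) as [|Hl]; auto.
  rewrite lim_eps in H; destruct (H (c - l)) as [alp [Hal H']]; [lra|].
  destruct (Ha alp Hal) as [y [Dy Hy]]; unfold Rdist in Hy.
  specialize (H' y Dy Hy); specialize (Hc y Dy).
  apply Rabs_def2 in H'; lra.
Qed.

Lemma lim_le f D l x c : (forall y, D y -> f y <= c) -> adhDa D x -> limit1_in f D l x -> l <= c.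
Proof.
  intros Hc Ha H.
  assert (-c <= -l); [|lra].
  apply (lim_ge (fun y => - f y) D (-l) x); auto.
  - intros y Dy; specialize (Hc y Dy); lra.
  - apply limit_Ropp; auto.
Qed.

Definition clamp (a b x : R) := Rmax a (Rmin b x).

Section S.
Variables a b : R.
Hypothesis hab : a < b.

Notation I := (in_I a b).
Definition Dx (x : R) := fun y => in_I a b y /\ y <> x.

Lemma adh_Dx x : I x -> adhDa (Dx x) x.
Proof.
  intros [H1 H2] alp Ha; unfold Dx, in_I, Rdist.
  destruct (Rlt_or_le x b) as [Hx|Hx].
  - exists (x + Rmin alp (b - x) / 2).
    assert (0 < Rmin alp (b-x)) by (apply Rmin_pos; lra).
    assert (Rmin alp (b-x) <= alp) by apply Rmin_l.
    assert (Rmin alp (b-x) <= b - x) by apply Rmin_r.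
    split; [split; [split|]|]; try lra.
    rewrite Rabs_right; lra.
  - exists (x - Rmin alp (b - a) / 2).
    assert (0 < Rmin alp (b-a)) by (apply Rmin_pos; lra).
    assert (Rmin alp (b-a) <= alp) by apply Rmin_l.
    assert (Rmin alp (b-a) <= b - a) by apply Rmin_r.
    split; [split; [split|]|]; try lra.
    rewrite Rabs_left; lra.
Qed.

Lemma adh_I x : I x -> adhDa I x.
Proof.
  intros Hx alp Ha; destruct (adh_Dx x Hx alp Ha) as [y [[Hy _] H]]; eauto.
Qed.

Lemma deriv_unique F d1 d2 : deriv_on a b F d1 -> deriv_on a b F d2 ->
  forall x, I x -> d1 x = d2 x.
Proof.
  intros H1 H2 x Hx; eapply single_limit; [| apply H1 | apply H2]; auto.
  apply adh_Dx; auto.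
Qed.

Lemma deriv_ext F F' d : (forall x, I x -> F x = F' x) -> deriv_on a b F d -> deriv_on a b F' d.
Proof.
  intros E H x Hx; eapply lim_ext; [|apply H; auto].
  intros y [Hy _]; simpl; rewrite !E; auto.
Qed.

Lemma deriv_id : deriv_on a b (fun x => x) (fun _ => 1).
Proof.
  intros x Hx; eapply lim_ext; [| apply (limit_free (fun _ => 1) _ 0)].
  intros y [Hy Hne]; simpl; field; intro E; apply Hne; lra.
Qed.

Lemma deriv_cont F d : deriv_on a b F d -> forall x, I x -> limit1_in F I (F x) x.
Proof.
  intros H x Hx.
  assert (L : limit1_in (fun y => F x + (F y - F x) / (y - x) * (y - x)) (Dx x) (F x + d x * 0) x).
  { apply limit_plus; [apply (limit_free (fun _ => F x) _ 0)|].
    apply limit_mul; [apply H; auto|].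
    rewrite lim_eps; intros eps He; exists eps; split; auto; intros y _ Hy.
    rewrite Rminus_0_r; auto. }
  rewrite Rmult_0_r, Rplus_0_r in L.
  rewrite lim_eps in L |- *; intros eps He; destruct (L eps He) as [alp [Ha H']].
  exists alp; split; auto; intros y Hy Hyx.
  destruct (Req_dec y x) as [->|Hne].
  - rewrite Rminus_diag, Rabs_R0; auto.
  - specialize (H' y (conj Hy Hne) Hyx).
    replace (F y) with (F x + (F y - F x) / (y - x) * (y - x)); auto.
    field; intro E; apply Hne; lra.
Qed.

Lemma deriv_comp f g df dg : deriv_on a b g dg -> deriv_on a b f df ->
  (forall x, I x -> I (g x)) -> (forall x y, I x -> I y -> g x = g y -> x = y) ->
  deriv_on a b (fun x => f (g x)) (fun x => df (g x) * dg x).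
Proof.
  intros Hg Hf Hm Hi x Hx.
  assert (L1 : limit1_in (fun y => (f (g y) - f (g x)) / (g y - g x)) (Dx x) (df (g x)) x).
  { assert (C : limit1_in g (Dx x) (g x) x).
    { apply (lim_sub _ I); [intros y [Hy _]; auto|]. apply (deriv_cont g dg); auto. }
    pose proof (limit_comp g (fun z => (f z - f (g x)) / (z - g x)) (Dx x) (Dx (g x)) _ _ x C
      (Hf (g x) (Hm x Hx))) as L.
    apply (lim_sub _ _ _ _ _ (fun y Hy => Hy)) in L.
    eapply lim_sub; [| exact L].
    intros y [Hy Hne]; split; [split; auto|split; [apply Hm; auto| intro E; apply Hne; apply Hi; auto]]. }
  pose proof (limit_mul _ _ _ _ _ _ L1 (Hg x Hx)) as L.
  eapply lim_ext; [| exact L].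
  intros y [Hy Hne]; simpl.
  assert (g y <> g x) by (intro E; apply Hne; apply Hi; auto).
  field; split; intro E; [apply Hne|apply H]; lra.
Qed.

Lemma deriv_lin f g df dg c : deriv_on a b f df -> deriv_on a b g dg ->
  deriv_on a b (fun x => f x + c * (g x - f x)) (fun x => df x + c * (dg x - df x)).
Proof.
  intros Hf Hg x Hx.
  pose proof (limit_plus _ _ _ _ _ _ (Hf x Hx)
     (limit_mul _ _ _ _ _ _ (limit_free (fun _ => c) (Dx x) 0 x) (limit_minus _ _ _ _ _ _ (Hg x Hx) (Hf x Hx)))) as L.
  eapply lim_ext; [| exact L].
  intros y [Hy Hne]; simpl; field; intro E; apply Hne; lra.
Qed.


Lemma clamp_I x : I (clamp a b x).
Proof. unfold clamp, in_I, Rmax, Rmin; repeat destruct Rle_dec; lra. Qed.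

Lemma clamp_id x : I x -> clamp a b x = x.
Proof. unfold clamp, in_I, Rmax, Rmin; intros; repeat destruct Rle_dec; lra. Qed.

Lemma clamp_lip u v : Rabs (clamp a b u - clamp a b v) <= Rabs (u - v).
Proof. unfold clamp, Rmax, Rmin; repeat destruct Rle_dec; split_Rabs; lra. Qed.

Lemma cont_clamp F : (forall x, I x -> limit1_in F I (F x) x) ->
  forall x, continuity_pt (fun u => F (clamp a b u)) x.
Proof.
  intros H x; unfold continuity_pt, continue_in; rewrite lim_eps; intros eps He.
  pose proof (H (clamp a b x) (clamp_I x)) as Hc; rewrite lim_eps in Hc.
  destruct (Hc eps He) as [alp [Ha H']]; exists alp; split; auto.
  intros y _ Hy; apply H'; [apply clamp_I|].
  eapply Rle_lt_trans; [apply clamp_lip|]; auto.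
Qed.

Lemma mvt_I F d y z : deriv_on a b F d -> I y -> I z -> y < z ->
  exists c, I c /\ F z - F y = d c * (z - y).
Proof.
  intros H Hy Hz Hyz.
  destruct (Derive.MVT_gen (fun u => F (clamp a b u)) y z d) as [c [Hc E]].
  - intros x Hx; rewrite Rmin_left in Hx by lra; rewrite Rmax_right in Hx by lra.
    apply Derive.is_derive_Reals.
    destruct Hy, Hz.
    intros eps He.
    pose proof (H x ltac:(unfold in_I; lra)) as Hl; rewrite lim_eps in Hl.
    destruct (Hl eps He) as [alp [Ha H']].
    assert (Hp : 0 < Rmin alp (Rmin (x - a) (b - x))) by (repeat apply Rmin_pos; lra).
    exists (mkposreal _ Hp); simpl; intros h Hh0 Hh.
    assert (Rmin alp (Rmin (x - a) (b - x)) <= alp) by apply Rmin_l.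
    assert (Rmin alp (Rmin (x - a) (b - x)) <= x - a) by (eapply Rle_trans; [apply Rmin_r|apply Rmin_l]).
    assert (Rmin alp (Rmin (x - a) (b - x)) <= b - x) by (eapply Rle_trans; [apply Rmin_r|apply Rmin_r]).
    assert (Ixh : I (x + h)) by (unfold in_I; split_Rabs; lra).
    rewrite !clamp_id; auto; [|unfold in_I; lra].
    replace h with ((x + h) - x) at 2 by ring.
    apply H'; [split; auto; intro E; apply Hh0; lra|].
    replace (x + h - x) with h by ring; lra.
  - intros x _; apply cont_clamp; apply deriv_cont with d; auto.
  - rewrite !clamp_id in E; auto.
    rewrite Rmin_left in Hc by lra; rewrite Rmax_right in Hc by lra.
    exists c; split; auto; destruct Hy, Hz; unfold in_I; lra.
Qed.

Lemma mvt_bound F d e : deriv_on a b F d -> (forall x, I x -> Rabs (d x - 1) <= e) ->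
  forall y z, I y -> I z -> Rabs ((F z - F y) - (z - y)) <= e * Rabs (z - y).
Proof.
  intros H Hd.
  assert (K : forall y z, I y -> I z -> y < z -> Rabs ((F z - F y) - (z - y)) <= e * Rabs (z - y)).
  { intros y z Hy Hz Hyz; destruct (mvt_I F d y z H Hy Hz Hyz) as [c [Hc E]].
    rewrite E; replace (d c * (z - y) - (z - y)) with ((d c - 1) * (z - y)) by ring.
    rewrite Rabs_mult; apply Rmult_le_compat_r; [apply Rabs_pos|auto]. }
  intros y z Hy Hz; destruct (Rtotal_order y z) as [Hl|[Heq|Hg]].
  - auto.
  - subst; rewrite !Rminus_diag, Rabs_R0; lra.
  - specialize (K z y Hz Hy Hg).
    replace (F z - F y - (z - y)) with (- (F y - F z - (y - z))) by ring.
    replace (z - y) with (- (y - z)) by ring; rewrite !Rabs_Ropp; auto.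
Qed.

Lemma bound_deriv F d e : deriv_on a b F d ->
  (forall y z, I y -> I z -> Rabs ((F z - F y) - (z - y)) <= e * Rabs (z - y)) ->
  forall x, I x -> Rabs (d x - 1) <= e.
Proof.
  intros H B x Hx.
  assert (Q : forall y, Dx x y -> 1 - e <= (F y - F x) / (y - x) <= 1 + e).
  { intros y [Hy Hne]; specialize (B x y Hx Hy).
    set (q := (F y - F x) / (y - x)).
    assert (E : F y - F x = q * (y - x)) by (unfold q; field; intro; apply Hne; lra).
    rewrite E in B.
    destruct (Rlt_or_le y x) as [Hl|Hl].
    - assert (y - x < 0) by lra.
      rewrite (Rabs_left (y - x)) in B by lra.
      replace (q * (y - x) - (y - x)) with ((q - 1) * (y - x)) in B by ring.
      rewrite Rabs_mult, (Rabs_left (y - x)) in B by lra.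
      assert (Rabs (q - 1) <= e) by nra. split_Rabs; lra.
    - assert (y - x > 0) by (destruct Hl; [lra| subst; tauto]).
      replace (q * (y - x) - (y - x)) with ((q - 1) * (y - x)) in B by ring.
      rewrite Rabs_mult, (Rabs_right (y - x)) in B by lra.
      assert (Rabs (q - 1) <= e) by nra. split_Rabs; lra. }
  assert (A1 : 1 - e <= d x) by (apply (lim_ge (fun y => (F y - F x) / (y - x)) (Dx x) _ x); [intros y Hy; apply Q; auto | apply adh_Dx; auto | apply H; auto]).
  assert (A2 : d x <= 1 + e) by (apply (lim_le (fun y => (F y - F x) / (y - x)) (Dx x) _ x); [intros y Hy; apply Q; auto | apply adh_Dx; auto | apply H; auto]).
  split_Rabs; lra.
Qed.


Lemma diff_mapI h : Diff1p a b h -> forall x, I x -> I (h x).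
Proof. intros [[fi [Hi _]] _] x Hx; apply (Hi x Hx). Qed.

Lemma diff_incr h : Diff1p a b h -> forall x y, I x -> I y -> x < y -> h x < h y.
Proof. intros [_ H]; auto. Qed.

Lemma diff_inj h : Diff1p a b h -> forall x y, I x -> I y -> h x = h y -> x = y.
Proof.
  intros H x y Hx Hy E; destruct (Rtotal_order x y) as [l|[e|g]]; auto.
  - pose proof (diff_incr h H x y Hx Hy l); lra.
  - pose proof (diff_incr h H y x Hy Hx g); lra.
Qed.

Lemma inv_inj h hi : inverse_on a b h hi -> forall x y, I x -> I y -> hi x = hi y -> x = y.
Proof.
  intros H x y Hx Hy E.
  destruct (H x Hx) as [_ [_ [E1 _]]]; destruct (H y Hy) as [_ [_ [E2 _]]].
  rewrite <- E1, <- E2, E; auto.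
Qed.

Lemma inv_mapI h hi : inverse_on a b h hi -> forall x, I x -> I (hi x).
Proof. intros H x Hx; apply (H x Hx). Qed.

Lemma inv_agree h hi fi : inverse_on a b h hi -> inverse_on a b h fi -> forall x, I x -> hi x = fi x.
Proof.
  intros H1 H2 x Hx.
  destruct (H1 x Hx) as [_ [Hu [E1 _]]].
  destruct (H2 (hi x) Hu) as [_ [_ [_ E2]]].
  rewrite <- E2 at 1; rewrite E1; auto.
Qed.

Lemma diff_deriv h : Diff1p a b h -> exists d, deriv_on a b h d /\ (forall x, I x -> limit1_in d I (d x) x).
Proof. intros [[fi [_ [H _]]] _]; exact H. Qed.

Lemma inv_deriv h hi : Diff1p a b h -> inverse_on a b h hi -> exists d, deriv_on a b hi d.
Proof.
  intros [[fi [Hfi [_ [d [Hd _]]]]] _] Hhi; exists d.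
  apply deriv_ext with fi; auto.
  intros x Hx; symmetry; apply (inv_agree h hi fi); auto.
Qed.

Lemma deriv_pos h d : Diff1p a b h -> deriv_on a b h d -> forall x, I x -> 0 < d x.
Proof.
  intros Hh Hd x Hx.
  pose proof Hh as [[fi [Hfi [_ [dfi [Hdfi _]]]]] Hincr].
  assert (C : deriv_on a b (fun y => fi (h y)) (fun y => dfi (h y) * d y)).
  { apply deriv_comp; auto; [apply diff_mapI; auto | apply diff_inj; auto]. }
  apply (deriv_ext _ (fun y => y)) in C; [| intros y Hy; apply (Hfi y Hy)].
  pose proof (deriv_unique _ _ _ C deriv_id x Hx) as E; simpl in E.
  assert (Hne : d x <> 0) by (intro Z; rewrite Z in E; lra).
  assert (0 <= d x); [|lra].
  apply (lim_ge (fun y => (h y - h x) / (y - x)) (Dx x) _ x); [| apply adh_Dx; auto | apply Hd; auto].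
  intros y [Hy Hyx].
  set (q := (h y - h x) / (y - x)).
  assert (E2 : h y - h x = q * (y - x)) by (unfold q; field; intro; apply Hyx; lra).
  destruct (Rtotal_order y x) as [l|[e|g]]; [| tauto |].
  - pose proof (Hincr y x Hy Hx l); nra.
  - pose proof (Hincr x y Hx Hy g); nra.
Qed.

Lemma diff_a h : Diff1p a b h -> h a = a.
Proof.
  intros Hh; pose proof Hh as [[fi [Hfi _]] Hincr].
  assert (Ia : I a) by (unfold in_I; lra).
  destruct (Hfi a Ia) as [[Ha1 Ha2] [[Hu1 Hu2] [E _]]].
  destruct Hu1 as [Hu1|Hu1].
  - pose proof (Hincr a (fi a) Ia (conj (Rlt_le _ _ Hu1) Hu2) Hu1); lra.
  - rewrite Hu1 at 1; exact E.
Qed.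

Lemma diff_b h : Diff1p a b h -> h b = b.
Proof.
  intros Hh; pose proof Hh as [[fi [Hfi _]] Hincr].
  assert (Ib : I b) by (unfold in_I; lra).
  destruct (Hfi b Ib) as [[Ha1 Ha2] [[Hu1 Hu2] [E _]]].
  destruct Hu2 as [Hu2|Hu2].
  - pose proof (Hincr (fi b) b (conj Hu1 (Rlt_le _ _ Hu2)) Ib Hu2); lra.
  - rewrite <- Hu2 at 1; exact E.
Qed.


Lemma cont_lin d0 d1 l : (forall x, I x -> limit1_in d0 I (d0 x) x) -> (forall x, I x -> limit1_in d1 I (d1 x) x) ->
  forall x, I x -> limit1_in (fun x => d0 x + l * (d1 x - d0 x)) I (d0 x + l * (d1 x - d0 x)) x.
Proof.
  intros H0 H1 x Hx.
  apply limit_plus; auto; apply limit_mul; [apply (limit_free (fun _ => l) _ 0)|]; apply limit_minus; auto.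
Qed.

Lemma interp_diff h0 h1 l : Diff1p a b h0 -> Diff1p a b h1 -> 0 <= l <= 1 ->
  Diff1p a b (fun x => h0 x + l * (h1 x - h0 x)).
Proof.
  intros D0 D1 Hl.
  set (H := fun x => h0 x + l * (h1 x - h0 x)).
  destruct (diff_deriv h0 D0) as [d0 [Hd0 Hc0]].
  destruct (diff_deriv h1 D1) as [d1 [Hd1 Hc1]].
  set (dH := fun x => d0 x + l * (d1 x - d0 x)).
  assert (HdH : deriv_on a b H dH) by (apply deriv_lin; auto).
  assert (HcH : forall x, I x -> limit1_in dH I (dH x) x) by (apply cont_lin; auto).
  assert (Hincr : forall x y, I x -> I y -> x < y -> H x < H y).
  { intros x y Hx Hy Hxy; unfold H.
    pose proof (diff_incr h0 D0 x y Hx Hy Hxy); pose proof (diff_incr h1 D1 x y Hx Hy Hxy).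
    assert (0 <= l * (h1 y - h1 x)) by (apply Rmult_le_pos; lra).
    destruct (Rlt_or_le l 1).
    - assert (0 < (1 - l) * (h0 y - h0 x)) by (apply Rmult_lt_0_compat; lra). nra.
    - assert (l = 1) by lra; subst l; lra. }
  assert (Hpos : forall x, I x -> 0 < dH x).
  { intros x Hx; unfold dH; pose proof (deriv_pos h0 d0 D0 Hd0 x Hx);
    pose proof (deriv_pos h1 d1 D1 Hd1 x Hx).
    assert (0 <= l * d1 x) by (apply Rmult_le_pos; lra).
    destruct (Rlt_or_le l 1).
    - assert (0 < (1 - l) * d0 x) by (apply Rmult_lt_0_compat; lra). nra.
    - assert (l = 1) by lra; subst l; lra. }
  assert (Ia : I a) by (unfold in_I; lra). assert (Ib : I b) by (unfold in_I; lra).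
  assert (Ha : H a = a) by (unfold H; rewrite (diff_a h0 D0), (diff_a h1 D1); ring).
  assert (Hb : H b = b) by (unfold H; rewrite (diff_b h0 D0), (diff_b h1 D1); ring).
  assert (HmI : forall x, I x -> I (H x)).
  { intros x [Hx1 Hx2]; split.
    - destruct Hx1 as [Hx1|Hx1]; [|subst; lra].
      pose proof (Hincr a x Ia (conj (Rlt_le _ _ Hx1) Hx2) Hx1); lra.
    - destruct Hx2 as [Hx2|Hx2]; [|subst; lra].
      pose proof (Hincr x b (conj Hx1 (Rlt_le _ _ Hx2)) Ib Hx2); lra. }
  assert (Hinj : forall x y, I x -> I y -> H x = H y -> x = y).
  { intros x y Hx Hy E; destruct (Rtotal_order x y) as [l'|[e|g]]; auto.
    - pose proof (Hincr x y Hx Hy l'); lra.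
    - pose proof (Hincr y x Hy Hx g); lra. }
  assert (Hcont : forall x, I x -> limit1_in H I (H x) x) by (apply deriv_cont with dH; auto).
  assert (Ex : forall y, exists z, I y -> I z /\ H z = y).
  { intros y.
    destruct (Rle_dec a y) as [Hy1|Hy1]; [|exists 0; intro Hy; destruct Hy; lra].
    destruct (Rle_dec y b) as [Hy2|Hy2]; [|exists 0; intro Hy; destruct Hy; lra].
    assert (Cf : continuity (fun u => H (clamp a b u) - y)).
    { intro x; apply continuity_pt_minus; [apply cont_clamp; auto | apply continuity_pt_const; intros u v; auto]. }
    destruct (IVT_cor _ a b Cf (Rlt_le _ _ hab)) as [z [Hz E]].
    - rewrite !clamp_id; auto. rewrite Ha, Hb. nra.
    - exists z; intros _; split; auto. rewrite clamp_id in E; auto; lra. }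
  set (HI := fun y => proj1_sig (constructive_indefinite_description _ (Ex y))).
  assert (HHI : forall y, I y -> I (HI y) /\ H (HI y) = y).
  { intros y Hy; unfold HI; destruct (constructive_indefinite_description _ (Ex y)) as [z Hz]; simpl; auto. }
  assert (Hinv : inverse_on a b H HI).
  { intros x Hx; destruct (HHI x Hx) as [Hz Ez]; split; [auto|split; [auto|split; [auto|]]].
    destruct (HHI (H x) (HmI x Hx)) as [Hz' Ez']; apply Hinj; auto. }
  assert (Cd : forall c, a <= c <= b -> continuity_pt (fun u => dH (clamp a b u)) c) by (intros; apply cont_clamp; auto).
  destruct (continuity_ab_min _ a b (Rlt_le _ _ hab) Cd) as [mx [Hmx Imx]].
  set (m := dH mx).
  assert (Hm0 : 0 < m) by (unfold m; rewrite <- (clamp_id mx) at 1; auto; apply Hpos; apply clamp_I).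
  assert (Hmle : forall c, I c -> m <= dH c).
  { intros c Hc; specialize (Hmx c Hc); rewrite !clamp_id in Hmx; auto. }
  assert (Hexp : forall u v, I u -> I v -> m * Rabs (v - u) <= Rabs (H v - H u)).
  { assert (K : forall u v, I u -> I v -> u < v -> m * Rabs (v - u) <= Rabs (H v - H u)).
    { intros u v Hu Hv Huv; destruct (mvt_I H dH u v HdH Hu Hv Huv) as [c [Hc E]].
      rewrite E, Rabs_mult, (Rabs_right (dH c)) by (left; apply Hpos; auto).
      apply Rmult_le_compat_r; [apply Rabs_pos| apply Hmle; auto]. }
    intros u v Hu Hv; destruct (Rtotal_order u v) as [l'|[e|g]].
    - auto.
    - subst; rewrite !Rminus_diag, Rabs_R0; lra.
    - specialize (K v u Hv Hu g). rewrite <- (Rabs_Ropp (v - u)), <- (Rabs_Ropp (H v - H u)).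
      replace (- (v - u)) with (u - v) by ring; replace (- (H v - H u)) with (H u - H v) by ring; auto. }
  assert (HIc : forall y, I y -> limit1_in HI I (HI y) y).
  { intros y Hy; rewrite lim_eps; intros eps He; exists (eps * m); split; [nra|].
    intros z Hz Hzy.
    destruct (HHI y Hy) as [Iy Ey]; destruct (HHI z Hz) as [Iz Ez].
    specialize (Hexp (HI y) (HI z) Iy Iz); rewrite Ey, Ez in Hexp.
    apply Rmult_lt_reg_l with m; auto; lra. }
  split.
  2:{ exact Hincr. }
  exists HI; split; [exact Hinv|split].
  - exists dH; split; auto.
  - exists (fun y => / dH (HI y)); split.
    + intros y Hy.
      destruct (HHI y Hy) as [Iy Ey].
      assert (C : limit1_in HI (Dx y) (HI y) y) by (apply (lim_sub _ I); [intros z [Hz _]; auto| auto]).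
      pose proof (limit_comp HI (fun v => (H v - H (HI y)) / (v - HI y)) (Dx y) (Dx (HI y)) _ _ y C
        (HdH (HI y) Iy)) as L.
      apply limit_inv in L; [| apply Rgt_not_eq, Hpos; auto].
      apply (lim_sub _ _ (Dx y)) in L.
      2:{ intros z [Hz Hne]; split; [split; auto|split; [apply HHI; auto|]].
          intro E; apply Hne; apply (inv_inj H HI Hinv); auto. }
      eapply lim_ext; [| exact L].
      intros z [Hz Hne]; simpl.
      destruct (HHI z Hz) as [Iz Ez].
      assert (HI z <> HI y) by (intro E; apply Hne; apply (inv_inj H HI Hinv); auto).
      rewrite Ey, Ez; field; split; intro E; [apply Hne | apply H0]; lra.
    + intros y Hy.
      destruct (HHI y Hy) as [Iy Ey].
      pose proof (limit_comp HI dH I I _ _ y (HIc y Hy) (HcH (HI y) Iy)) as L.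
      apply limit_inv in L; [| apply Rgt_not_eq, Hpos; auto].
      eapply lim_sub; [| exact L].
      intros z Hz; split; auto; apply HHI; auto.
Qed.


Lemma conj_props h hi g e : Diff1p a b h -> inverse_on a b h hi -> Diff1p a b g ->
  C1_close a b (fun x => h (g (hi x))) (fun x => x) e ->
  (forall u, I u -> Rabs (h (g u) - h u) < e) /\
  (forall u v, I u -> I v -> Rabs ((h (g v) - h (g u)) - (h v - h u)) <= e * Rabs (h v - h u)).
Proof.
  intros Dh Hhi Dg Hc.
  destruct (inv_deriv h hi Dh Hhi) as [dhi Hdhi].
  destruct (diff_deriv g Dg) as [dg [Hdg _]].
  destruct (diff_deriv h Dh) as [dh [Hdh _]].
  assert (C1 : deriv_on a b (fun x => g (hi x)) (fun x => dg (hi x) * dhi x)).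
  { apply deriv_comp; auto; [apply inv_mapI with h; auto | apply inv_inj with h; auto]. }
  assert (C2 := deriv_comp _ _ _ _ C1 Hdh).
  assert (M : forall x, I x -> I (g (hi x))) by (intros x Hx; apply diff_mapI; auto; apply inv_mapI with h; auto).
  specialize (C2 M).
  assert (Inj : forall x y, I x -> I y -> g (hi x) = g (hi y) -> x = y).
  { intros x y Hx Hy E; apply (inv_inj h hi Hhi); auto; apply (diff_inj g Dg); auto; apply inv_mapI with h; auto. }
  specialize (C2 Inj).
  specialize (Hc _ _ C2 deriv_id).
  assert (Key : forall u, I u -> h (g (hi (h u))) = h (g u)).
  { intros u Hu; destruct (Hhi u Hu) as [_ [_ [_ E]]]; rewrite E; auto. }
  split.
  - intros u Hu; destruct (Hc (h u) (diff_mapI h Dh u Hu)) as [H1 _]. rewrite Key in H1; auto.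
  - intros u v Hu Hv.
    assert (B := mvt_bound _ _ e C2).
    rewrite <- (Key u Hu), <- (Key v Hv).
    apply B; try (apply diff_mapI; auto).
    intros x Hx; left; apply (Hc x Hx).
Qed.

Lemma mediant l e A0 B0 A1 B1 : 0 <= l <= 1 -> Rabs (A0 - B0) <= e * Rabs B0 ->
  Rabs (A1 - B1) <= e * Rabs B1 -> ((0 <= B0 /\ 0 <= B1) \/ (B0 <= 0 /\ B1 <= 0)) ->
  Rabs (((1 - l) * A0 + l * A1) - ((1 - l) * B0 + l * B1)) <= e * Rabs ((1 - l) * B0 + l * B1).
Proof.
  intros Hl H0 H1 Hs.
  replace (((1 - l) * A0 + l * A1) - ((1 - l) * B0 + l * B1)) with ((1 - l) * (A0 - B0) + l * (A1 - B1)) by ring.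
  eapply Rle_trans; [apply Rabs_triang|].
  rewrite !Rabs_mult, (Rabs_right (1 - l)), (Rabs_right l) by lra.
  assert (E : Rabs ((1 - l) * B0 + l * B1) = (1 - l) * Rabs B0 + l * Rabs B1).
  { destruct Hs as [[P0 P1]|[P0 P1]].
    - rewrite !Rabs_right; try lra. apply Rle_ge; apply Rplus_le_le_0_compat; apply Rmult_le_pos; lra.
    - rewrite Rabs_left1, (Rabs_left1 B0), (Rabs_left1 B1); try lra.
      assert (0 <= (1 - l) * (- B0)) by (apply Rmult_le_pos; lra).
      assert (0 <= l * (- B1)) by (apply Rmult_le_pos; lra). lra. }
  rewrite E.
  assert ((1 - l) * Rabs (A0 - B0) <= (1 - l) * (e * Rabs B0)) by (apply Rmult_le_compat_l; lra).
  assert (l * Rabs (A1 - B1) <= l * (e * Rabs B1)) by (apply Rmult_le_compat_l; lra).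
  lra.
Qed.

Lemma interp_conj h0 hi0 h1 hi1 g l e : Diff1p a b h0 -> inverse_on a b h0 hi0 ->
  Diff1p a b h1 -> inverse_on a b h1 hi1 -> Diff1p a b g -> 0 <= l <= 1 ->
  C1_close a b (fun x => h0 (g (hi0 x))) (fun x => x) e ->
  C1_close a b (fun x => h1 (g (hi1 x))) (fun x => x) e ->
  forall HI, inverse_on a b (fun x => h0 x + l * (h1 x - h0 x)) HI ->
  forall eps, e < eps ->
  C1_close a b (fun x => (fun y => h0 y + l * (h1 y - h0 y)) (g (HI x))) (fun x => x) eps.
Proof.
  intros D0 Hi0 D1 Hi1 Dg Hl C0 C1 HI HHI eps He.
  destruct (conj_props h0 hi0 g e D0 Hi0 Dg C0) as [P0 Q0].
  destruct (conj_props h1 hi1 g e D1 Hi1 Dg C1) as [P1 Q1].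
  set (H := fun y => h0 y + l * (h1 y - h0 y)).
  intros df dg Hdf Hdg x Hx.
  assert (E1 : dg x = 1) by (apply (deriv_unique _ _ _ Hdg deriv_id); auto).
  rewrite E1.
  destruct (HHI x Hx) as [_ [Iu [Eu _]]].
  assert (Igu : I (g (HI x))) by (apply diff_mapI; auto).
  split.
  - assert (T : Rabs (H (g (HI x)) - H (HI x)) < eps).
    { unfold H.
      replace (h0 (g (HI x)) + l * (h1 (g (HI x)) - h0 (g (HI x))) - (h0 (HI x) + l * (h1 (HI x) - h0 (HI x))))
        with ((1 - l) * (h0 (g (HI x)) - h0 (HI x)) + l * (h1 (g (HI x)) - h1 (HI x))) by ring.
      eapply Rle_lt_trans; [apply Rabs_triang|].
      rewrite !Rabs_mult, (Rabs_right (1 - l)), (Rabs_right l) by lra.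
      specialize (P0 _ Iu); specialize (P1 _ Iu).
      assert ((1 - l) * Rabs (h0 (g (HI x)) - h0 (HI x)) <= (1 - l) * e) by (apply Rmult_le_compat_l; lra).
      assert (l * Rabs (h1 (g (HI x)) - h1 (HI x)) <= l * e) by (apply Rmult_le_compat_l; lra).
      lra. }
    unfold H in T; rewrite Eu in T; cbv beta; exact T.
  - assert (B : Rabs (df x - 1) <= e); [|lra].
    apply (bound_deriv _ df e Hdf); auto.
    intros y z Hy Hz.
    destruct (HHI y Hy) as [_ [Iv [Ev _]]]; destruct (HHI z Hz) as [_ [Iw [Ew _]]].
    set (u := HI y) in *; set (v := HI z) in *.
    assert (T : Rabs ((H (g v) - H (g u)) - (H v - H u)) <= e * Rabs (H v - H u)).
    { unfold H.
      replace (h0 (g v) + l * (h1 (g v) - h0 (g v)) - (h0 (g u) + l * (h1 (g u) - h0 (g u))))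
        with ((1 - l) * (h0 (g v) - h0 (g u)) + l * (h1 (g v) - h1 (g u))) by ring.
      replace (h0 v + l * (h1 v - h0 v) - (h0 u + l * (h1 u - h0 u)))
        with ((1 - l) * (h0 v - h0 u) + l * (h1 v - h1 u)) by ring.
      apply mediant; auto.
      destruct (Rtotal_order u v) as [lt|[eq|gt]].
      + left; pose proof (diff_incr h0 D0 u v Iv Iw lt); pose proof (diff_incr h1 D1 u v Iv Iw lt); lra.
      + left; rewrite eq; lra.
      + right; pose proof (diff_incr h0 D0 v u Iw Iv gt); pose proof (diff_incr h1 D1 v u Iw Iv gt); lra. }
    unfold H in T; rewrite Ev, Ew in T; cbv beta; exact T.
Qed.


Lemma bounded2 f1 f2 : (forall x, I x -> limit1_in f1 I (f1 x) x) -> (forall x, I x -> limit1_in f2 I (f2 x) x) ->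
  exists M, 0 <= M /\ forall x, I x -> Rabs (f1 x) <= M /\ Rabs (f2 x) <= M.
Proof.
  intros H1 H2.
  set (F := fun u => Rabs (f1 (clamp a b u)) + Rabs (f2 (clamp a b u))).
  assert (C : forall c, a <= c <= b -> continuity_pt F c).
  { intros c _.
    assert (A1 : continuity_pt (comp Rabs (fun u => f1 (clamp a b u))) c)
      by (apply continuity_pt_comp; [apply cont_clamp; auto | apply Rcontinuity_abs]).
    assert (A2 : continuity_pt (comp Rabs (fun u => f2 (clamp a b u))) c)
      by (apply continuity_pt_comp; [apply cont_clamp; auto | apply Rcontinuity_abs]).
    exact (continuity_pt_plus _ _ c A1 A2). }
  destruct (continuity_ab_maj F a b (Rlt_le _ _ hab) C) as [Mx [HM _]].
  exists (F Mx); split.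
  - unfold F; pose proof (Rabs_pos (f1 (clamp a b Mx))); pose proof (Rabs_pos (f2 (clamp a b Mx))); lra.
  - intros x Hx; specialize (HM x Hx); unfold F in HM; rewrite clamp_id in HM; auto.
    pose proof (Rabs_pos (f1 x)); pose proof (Rabs_pos (f2 x)); unfold F; split; lra.
Qed.

End S.

Lemma ex_floor r : exists n : nat, 0 <= r -> INR n <= r < INR n + 1.
Proof.
  destruct (Rle_dec 0 r) as [Hr|Hr]; [|exists 0%nat; intros; lra].
  destruct (archimed r) as [H1 H2].
  assert (Hz : (0 <= up r - 1)%Z).
  { assert (0 < up r)%Z by (apply lt_IZR; simpl; lra). lia. }
  exists (Z.to_nat (up r - 1)); intros _.
  rewrite INR_IZR_INZ, Z2Nat.id, minus_IZR by auto; simpl; lra.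
Qed.

Definition flr (r : R) : nat := proj1_sig (constructive_indefinite_description _ (ex_floor r)).

Lemma flr_spec r : 0 <= r -> INR (flr r) <= r < INR (flr r) + 1.
Proof. unfold flr; destruct (constructive_indefinite_description _ (ex_floor r)); simpl; auto. Qed.

Lemma floor_unique n m r : INR n <= r < INR n + 1 -> INR m <= r < INR m + 1 -> n = m.
Proof.
  intros Hn Hm; destruct (lt_eq_lt_dec n m) as [[lt|eq]|gt]; auto.
  - assert (INR (S n) <= INR m) by (apply le_INR; lia); rewrite S_INR in *; lra.
  - assert (INR (S m) <= INR n) by (apply le_INR; lia); rewrite S_INR in *; lra.
Qed.

Lemma flr_eq n r : INR n <= r < INR n + 1 -> flr r = n.
Proof.
  intros H; apply floor_unique with r; auto; apply flr_spec; pose proof (pos_INR n); lra.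
Qed.

Definition P (h : nat -> R -> R) (r : R) : R -> R :=
  fun x => h (flr r) x + (r - INR (flr r)) * (h (S (flr r)) x - h (flr r) x).

Lemma P_seg h m r : INR m <= r <= INR m + 1 -> forall x, P h r x = h m x + (r - INR m) * (h (S m) x - h m x).
Proof.
  intros [H1 H2] x; unfold P; destruct H2 as [H2|H2].
  - rewrite (flr_eq m r); auto.
  - rewrite (flr_eq (S m) r); [| rewrite S_INR; lra].
    rewrite S_INR, H2; ring.
Qed.

Lemma nat_large x : exists N : nat, x < INR N.
Proof.
  destruct (archimed x) as [H1 H2].
  destruct (Z_le_gt_dec 0 (up x)) as [Hz|Hz].
  - exists (Z.to_nat (up x)); rewrite INR_IZR_INZ, Z2Nat.id; auto; lra.
  - exists 0%nat; simpl. assert (IZR (up x) < 0) by (apply IZR_lt; lia). lra.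
Qed.


Lemma P_seg_bound (h : nat -> R -> R) (K : nat -> R) x m r r' :
  Rabs (h (S m) x - h m x) <= K m ->
  INR m <= r <= INR m + 1 -> INR m <= r' <= INR m + 1 ->
  Rabs (P h r x - P h r' x) <= K m * Rabs (r - r').
Proof.
  intros HK Hr Hr'.
  rewrite (P_seg h m r Hr x), (P_seg h m r' Hr' x).
  replace (h m x + (r - INR m) * (h (S m) x - h m x) - (h m x + (r' - INR m) * (h (S m) x - h m x)))
    with ((r - r') * (h (S m) x - h m x)) by ring.
  rewrite Rabs_mult, Rmult_comm; apply Rmult_le_compat_r; [apply Rabs_pos|auto].
Qed.

Lemma P_lip (h : nat -> R -> R) (K : nat -> R) x :
  (forall n, 0 <= K n /\ Rabs (h (S n) x - h n x) <= K n) ->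
  forall r0 r, 0 <= r0 -> 0 <= r -> Rabs (r - r0) < 1 ->
  Rabs (P h r x - P h r0 x) <= (K (pred (flr r0)) + K (flr r0) + K (S (flr r0))) * Rabs (r - r0).
Proof.
  intros HK r0 r H0 Hr Hd.
  pose proof (flr_spec r0 H0) as Hs.
  set (n := flr r0) in *.
  pose proof (HK (pred n)) as [K1 B1]; pose proof (HK n) as [K2 B2]; pose proof (HK (S n)) as [K3 B3].
  pose proof (Rabs_pos (r - r0)) as Ha.
  destruct (Rle_dec (INR n) r) as [L1|L1]; destruct (Rle_dec r (INR n + 1)) as [L2|L2].
  - eapply Rle_trans; [apply P_seg_bound with (m := n) (K := K); [exact B2| split; lra | split; lra]|].
    apply Rmult_le_compat_r; lra.
  -
    assert (E : Rabs (P h r x - P h r0 x) <= Rabs (P h r x - P h (INR (S n)) x) + Rabs (P h (INR (S n)) x - P h r0 x)).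
    { replace (P h r x - P h r0 x) with ((P h r x - P h (INR (S n)) x) + (P h (INR (S n)) x - P h r0 x)) by ring.
      apply Rabs_triang. }
    rewrite S_INR in E.
    assert (Q1 : Rabs (P h r x - P h (INR n + 1) x) <= K (S n) * Rabs (r - (INR n + 1))).
    { apply P_seg_bound; auto; rewrite S_INR; split_Rabs; lra. }
    assert (Q2 : Rabs (P h (INR n + 1) x - P h r0 x) <= K n * Rabs (INR n + 1 - r0)) by (apply P_seg_bound; auto; lra).
    rewrite (Rabs_right (r - (INR n + 1))) in Q1 by lra.
    rewrite (Rabs_right (INR n + 1 - r0)) in Q2 by lra.
    rewrite (Rabs_right (r - r0)) by lra.
    assert (K (S n) * (r - (INR n + 1)) <= K (S n) * (r - r0)) by (apply Rmult_le_compat_l; lra).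
    assert (K n * (INR n + 1 - r0) <= K n * (r - r0)) by (apply Rmult_le_compat_l; lra).
    assert (0 <= K (pred n) * (r - r0)) by (apply Rmult_le_pos; lra).
    nra.
  -
    destruct n as [|m].
    { simpl in L1; lra. }
    simpl pred in *.
    rewrite S_INR in *.
    assert (E : Rabs (P h r x - P h r0 x) <= Rabs (P h r x - P h (INR m + 1) x) + Rabs (P h (INR m + 1) x - P h r0 x)).
    { replace (P h r x - P h r0 x) with ((P h r x - P h (INR m + 1) x) + (P h (INR m + 1) x - P h r0 x)) by ring.
      apply Rabs_triang. }
    assert (Q1 : Rabs (P h r x - P h (INR m + 1) x) <= K m * Rabs (r - (INR m + 1))).
    { apply P_seg_bound; auto; split_Rabs; lra. }
    assert (Q2 : Rabs (P h (INR m + 1) x - P h r0 x) <= K (S m) * Rabs (INR m + 1 - r0)).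
    { apply P_seg_bound; auto; rewrite S_INR; lra. }
    rewrite (Rabs_left1 (r - (INR m + 1))) in Q1 by lra.
    rewrite (Rabs_left1 (INR m + 1 - r0)) in Q2 by lra.
    rewrite (Rabs_left1 (r - r0)) by lra.
    assert (K m * - (r - (INR m + 1)) <= K m * - (r - r0)) by (apply Rmult_le_compat_l; lra).
    assert (K (S m) * - (INR m + 1 - r0) <= K (S m) * - (r - r0)) by (apply Rmult_le_compat_l; lra).
    assert (0 <= K (S (S m)) * - (r - r0)) by (apply Rmult_le_pos; lra).
    nra.
  - lra.
Qed.

Lemma inv_small d x : d > 0 -> x > 0 -> / d < x -> / x < d.
Proof.
  intros Hd Hx H; rewrite <- (Rinv_inv d); apply Rinv_lt_contravar; auto.
  apply Rmult_lt_0_compat; auto; apply Rinv_0_lt_compat; auto.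
Qed.

Lemma r_nonneg t : 0 <= t < 1 -> 0 <= t / (1 - t).
Proof. intros Ht; unfold Rdiv; apply Rmult_le_pos; [lra| left; apply Rinv_0_lt_compat; lra]. Qed.

Lemma P_diff a b (hab : a < b) (h dh : nat -> R -> R) r :
  (forall n, Diff1p a b (h n)) -> (forall n, deriv_on a b (h n) (dh n)) -> 0 <= r ->
  Diff1p a b (P h r) /\ deriv_on a b (P h r) (P dh r).
Proof.
  intros Hd Hdh Hr; pose proof (flr_spec r Hr) as Hs; split.
  - unfold P; apply interp_diff; auto; lra.
  - unfold P; apply deriv_lin; auto.
Qed.

Theorem theoremt (a b : R) (hab : a < b) (G : (R -> R) -> Prop)
  (HG : subgroup_Diff1p a b G) :
  (exists (h hinv : R -> R -> R),
     (forall t, 0 <= t < 1 -> Diff1p a b (h t) /\ inverse_on a b (h t) (hinv t)) /\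
     (forall t0, 0 <= t0 < 1 -> forall eps, eps > 0 -> exists delta, delta > 0 /\
        forall t, 0 <= t < 1 -> Rabs (t - t0) < delta -> C1_close a b (h t) (h t0) eps) /\
     (forall g, G g -> forall eps, eps > 0 -> exists delta, delta > 0 /\
        forall t, 0 <= t < 1 -> 1 - delta < t ->
          C1_close a b (fun x => h t (g (hinv t x))) (fun x => x) eps))
  <->
  (exists (h hinv : nat -> R -> R),
     (forall n, Diff1p a b (h n) /\ inverse_on a b (h n) (hinv n)) /\
     (forall g, G g -> forall eps, eps > 0 -> exists N : nat,
        forall n, (N <= n)%nat ->
          C1_close a b (fun x => h n (g (hinv n x))) (fun x => x) eps)).
Proof.
  split.
  - intros [h [hinv [Hd [_ Hconv]]]].
    exists (fun n => h (1 - / (INR n + 2))), (fun n => hinv (1 - / (INR n + 2))).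
    assert (T : forall n : nat, 0 <= 1 - / (INR n + 2) < 1).
    { intros n; pose proof (pos_INR n).
      assert (0 < / (INR n + 2)) by (apply Rinv_0_lt_compat; lra).
      assert (/ (INR n + 2) * (INR n + 2) = 1) by (field; lra). nra. }
    split; [intros n; apply Hd; apply T|].
    intros g Hg eps He; destruct (Hconv g Hg eps He) as [d [Hd0 Hdd]].
    destruct (nat_large (/ d)) as [N HN]; exists N; intros n Hn.
    apply Hdd; [apply T|].
    assert (INR N <= INR n) by (apply le_INR; auto).
    assert (/ (INR n + 2) < d) by (pose proof (pos_INR n); apply inv_small; auto; lra).
    lra.
  - intros [h [hinv [Hd Hconv]]].
    assert (D : forall n, Diff1p a b (h n)) by (intro n; apply Hd).
    assert (Edh : exists dh : nat -> R -> R, forall n, deriv_on a b (h n) (dh n) /\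
              (forall x, in_I a b x -> limit1_in (dh n) (in_I a b) (dh n x) x)).
    { exists (fun n => proj1_sig (constructive_indefinite_description _ (diff_deriv a b (h n) (D n)))).
      intros n; exact (proj2_sig (constructive_indefinite_description _ (diff_deriv a b (h n) (D n)))). }
    destruct Edh as [dh Hdh].
    assert (Bn : forall n, exists M, 0 <= M /\ forall x, in_I a b x ->
               Rabs (h (S n) x - h n x) <= M /\ Rabs (dh (S n) x - dh n x) <= M).
    { intros n; apply bounded2; auto.
      - intros x Hx; apply limit_minus; apply (deriv_cont a b _ _ (proj1 (Hdh _))); auto.
      - intros x Hx; apply limit_minus; apply Hdh; auto. }
    set (K := fun n => proj1_sig (constructive_indefinite_description _ (Bn n))).
    assert (HK : forall n, 0 <= K n /\ forall x, in_I a b x ->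
               Rabs (h (S n) x - h n x) <= K n /\ Rabs (dh (S n) x - dh n x) <= K n).
    { intros n; exact (proj2_sig (constructive_indefinite_description _ (Bn n))). }
    assert (PD : forall r, 0 <= r -> Diff1p a b (P h r) /\ deriv_on a b (P h r) (P dh r)).
    { intros r Hr; apply P_diff; auto; intro n; apply Hdh. }
    assert (Ei : forall t, exists HI, 0 <= t < 1 -> inverse_on a b (P h (t / (1 - t))) HI).
    { intros t; destruct (Rle_dec 0 t) as [H1|H1]; [|exists (fun x => x); intros; lra].
      destruct (Rlt_dec t 1) as [H2|H2]; [|exists (fun x => x); intros; lra].
      destruct (PD (t / (1 - t)) (r_nonneg t (conj H1 H2))) as [[[fi [Hfi _]] _] _].
      exists fi; auto. }
    set (hinvt := fun t => proj1_sig (constructive_indefinite_description _ (Ei t))).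
    assert (Hhinvt : forall t, 0 <= t < 1 -> inverse_on a b (P h (t / (1 - t))) (hinvt t)).
    { intros t; exact (proj2_sig (constructive_indefinite_description _ (Ei t))). }
    exists (fun t => P h (t / (1 - t))), hinvt.
    split; [|split].
    + intros t Ht; split; [apply PD; apply r_nonneg; auto | apply Hhinvt; auto].
    + intros t0 Ht0 eps He.
      set (r0 := t0 / (1 - t0)).
      assert (Hr0 : 0 <= r0) by (apply r_nonneg; auto).
      set (L := K (pred (flr r0)) + K (flr r0) + K (S (flr r0))).
      assert (HL : 0 <= L) by (unfold L; pose proof (proj1 (HK (pred (flr r0)))); pose proof (proj1 (HK (flr r0))); pose proof (proj1 (HK (S (flr r0)))); lra).
      set (rho := Rmin 1 (eps / (L + 1))).
      assert (Hrho : 0 < rho) by (apply Rmin_pos; [lra| apply Rdiv_lt_0_compat; lra]).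
      assert (Hrho1 : rho <= 1) by apply Rmin_l.
      assert (Hrho2 : rho <= eps / (L + 1)) by apply Rmin_r.
      set (delta := Rmin ((1 - t0) / 2) (rho * ((1 - t0) * (1 - t0)) / 2)).
      assert (Hdel1 : delta <= (1 - t0) / 2) by apply Rmin_l.
      assert (Hdel2 : delta <= rho * ((1 - t0) * (1 - t0)) / 2) by apply Rmin_r.
      exists delta; split.
      { apply Rmin_pos; [lra|]. assert (0 < (1 - t0) * (1 - t0)) by nra.
        apply Rdiv_lt_0_compat; [nra|lra]. }
      intros t Ht Htt.
      set (r := t / (1 - t)).
      assert (Hr : 0 <= r) by (apply r_nonneg; auto).
      assert (Hrr : Rabs (r - r0) < rho).
      { assert (Ht1 : 1 - t > (1 - t0) / 2) by (split_Rabs; lra).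
        set (Dn := (1 - t) * (1 - t0)).
        assert (HDn : 0 < Dn) by (unfold Dn; apply Rmult_lt_0_compat; lra).
        assert (E : (r - r0) * Dn = t - t0) by (unfold r, r0, Dn; field; split; lra).
        assert (E2 : Rabs (r - r0) * Dn = Rabs (t - t0)) by (rewrite <- E, Rabs_mult, (Rabs_right Dn); lra).
        assert (Dn > (1 - t0) * (1 - t0) / 2) by (unfold Dn; nra).
        apply Rmult_lt_reg_r with Dn; auto. rewrite E2.
        assert (rho * ((1 - t0) * (1 - t0)) / 2 < rho * Dn) by nra.
        lra. }
      assert (Hlt : L * Rabs (r - r0) < eps).
      { assert (L * Rabs (r - r0) <= L * (eps / (L + 1))) by (apply Rmult_le_compat_l; lra).
        assert (L * (eps / (L + 1)) = eps - eps / (L + 1)) by (field; lra).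
        assert (0 < eps / (L + 1)) by (apply Rdiv_lt_0_compat; lra). lra. }
      intros df dg Hdf Hdg x Hx.
      destruct (PD r Hr) as [_ Dr]; destruct (PD r0 Hr0) as [_ Dr0].
      rewrite (deriv_unique a b hab _ _ _ Hdf Dr x Hx), (deriv_unique a b hab _ _ _ Hdg Dr0 x Hx).
      assert (Hrr1 : Rabs (r - r0) < 1) by lra.
      split.
      * eapply Rle_lt_trans; [apply (P_lip h K x); auto|exact Hlt].
        intros n; split; [apply HK | apply (HK n); auto].
      * eapply Rle_lt_trans; [apply (P_lip dh K x); auto|exact Hlt].
        intros n; split; [apply HK | apply (HK n); auto].
    + intros g Hg eps He.
      destruct (Hconv g Hg (eps / 2)) as [N HN]; [lra|].
      exists (/ (INR N + 1)); split.
      { apply Rinv_0_lt_compat; pose proof (pos_INR N); lra. }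
      intros t Ht Htd.
      set (r := t / (1 - t)).
      assert (Hr : 0 <= r) by (apply r_nonneg; auto).
      assert (HrN : INR N < r).
      { assert (E : r * (1 - t) = t) by (unfold r; field; lra).
        pose proof (pos_INR N).
        assert (E2 : / (INR N + 1) * (INR N + 1) = 1) by (field; lra).
        assert ((INR N + 1) * (1 - t) < 1) by nra.
        destruct (Rlt_or_le (INR N) r) as [|Hle]; auto.
        assert (r * (1 - t) <= INR N * (1 - t)) by (apply Rmult_le_compat_r; lra).
        lra. }
      pose proof (flr_spec r Hr) as Hs.
      set (n := flr r) in *.
      assert (HNn : (N <= n)%nat).
      { assert (INR N < INR (S n)) by (rewrite S_INR; lra). apply INR_lt in H. lia. }
      destruct HG as [HGd _].
      destruct (Hd n) as [Dn Hin]; destruct (Hd (S n)) as [DSn HiSn].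
      exact (interp_conj a b hab (h n) (hinv n) (h (S n)) (hinv (S n)) g (r - INR n) (eps / 2)
        Dn Hin DSn HiSn (HGd g Hg) ltac:(lra) (HN n HNn) (HN (S n) ltac:(lia))
        (hinvt t) (Hhinvt t Ht) eps ltac:(lra)).
Qed.
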